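(* For every $M\in\mathbb{N}\cup\{0\}$ there exists a one-sided shift space over an infinite alphabet that is an $(M+1)$-step shift space and is not conjugate to any $M$-step shift space.
   Context: Following Ott–Tomforde–Willis. For an alphabet $A$, let $\emptyset$ denote the empty sequence, $\Sigma_A^{fin}=\{\emptyset\}\cup\bigcup_{k\ge1}A^k$, $\Sigma_A^{inf}=A^{\mathbb N}$. For infinite $A$ the full shift is $\Sigma_A=\Sigma_A^{inf}\cup\Sigma_A^{fin}$ (for finite $A$ it is $\Sigma_A^{inf}$). The length $l(x)$ is $k$ if $x\in A^k$ and $\infty$ if $x$ is infinite. The topology on $\Sigma_A$ has as basis the generalized cylinders $Z(x,F)=\{y: y_i=x_i\ (1\le i\le k),\ y_{k+1}\notin F\}$ for $x=(x_1,\dots,x_k)\ne\emptyset$ and finite $F\subseteq A$, and $Z(\emptyset,F)=\{y: y_1\notin F\}$. The shift map $\sigma$ deletes the first letter. A shift space over $A$ is a subset $\Lambda\subseteq\Sigma_A$ that is closed, satisfies $\sigma(\Lambda)\subseteq\Lambda$, and has the infinite-extension property: for every $x\in\Lambda$ with $l(x)<\infty$ the set $\{a\in A: xay\in\Lambda$ for some $y\in\Sigma_A\}$ is infinite. For a set $\mathbf F$ of nonempty finite words, $X_{\mathbf F}=X_{\mathbf F}^{inf}\cup X_{\mathbf F}^{fin}$ where $X_{\mathbf F}^{inf}$ is the set of infinite sequences with no subblock in $\mathbf F$ and $X_{\mathbf F}^{fin}$ is the set of finite sequences $x$ for which there are infinitely many $a\in A$ such that $xay\in X_{\mathbf F}^{inf}$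 for some infinite $y$. An $N$-step shift space is a shift space of the form $X_{\mathbf F}$ with every word in $\mathbf F$ of length $N+1$. A conjugacy between shift spaces $\Lambda\subseteq\Sigma_A$, $Y\subseteq\Sigma_B$ is a continuous, shift-commuting bijection $\phi:\Lambda\to Y$ with $l(\phi(x))=l(x)$ for all $x$. *)

(* Defs.v *)
From Stdlib Require Import List Arith.
Import ListNotations.

(* Sequences over A: finite words (Fin [] is the empty sequence) or
   infinite sequences (indexed from 0 instead of 1). *)
Inductive Seq (A : Type) : Type :=
| Fin : list A -> Seq A
| Inf : (nat -> A) -> Seq A.
Arguments Fin {A} _.
Arguments Inf {A} _.

Definition infinite_pred {A : Type} (P : A -> Prop) : Prop :=
  ~ exists l : list A, forall a, P a -> In a l.

Definition infinite_type (A : Type) : Prop := infinite_pred (fun _ : A => True).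

Definition in_full_shift {A : Type} (x : Seq A) : Prop :=
  match x with
  | Inf _ => True
  | Fin _ => infinite_type A
  end.

(* length: None means infinity *)
Definition seq_len {A : Type} (x : Seq A) : option nat :=
  match x with
  | Fin l => Some (length l)
  | Inf _ => None
  end.

Definition letter {A : Type} (y : Seq A) (i : nat) : option A :=
  match y with
  | Fin l => nth_error l i
  | Inf f => Some (f i)
  end.

(* shift map: deletes the first letter (convention: sigma(empty) = empty) *)
Definition shift {A : Type} (x : Seq A) : Seq A :=
  match x with
  | Fin [] => Fin []
  | Fin (_ :: l) => Fin l
  | Inf f => Inf (fun n => f (S n))
  end.

Definition cyl {A : Type} (x : list A) (F : list A) (y : Seq A) : Prop :=
  (forall i a, nth_error x i = Some a -> letter y i = Some a) /\
  match letter y (length x) with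
  | Some b => ~ In b F
  | None => True
  end.

Definition is_open {A : Type} (U : Seq A -> Prop) : Prop :=
  forall y, U y -> exists x F, cyl x F y /\ forall z, cyl x F z -> U z.

Definition is_closed {A : Type} (C : Seq A -> Prop) : Prop :=
  is_open (fun y => ~ C y).

Definition prepend {A : Type} (w : list A) (f : nat -> A) : nat -> A :=
  fun n => if n <? length w then nth n w (f 0) else f (n - length w).

Definition cat_letter_seq {A : Type} (x : list A) (a : A) (y : Seq A) : Seq A :=
  match y with
  | Fin l => Fin (x ++ a :: l)
  | Inf f => Inf (prepend (x ++ [a]) f)
  end.

Definition is_shift_space {A : Type} (L : Seq A -> Prop) : Prop :=
  (forall x, L x -> in_full_shift x) /\
  is_closed L /\
  (forall x, L x -> L (shift x)) /\
  (forall x : list A, L (Fin x) ->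
     infinite_pred (fun a => exists y, in_full_shift y /\ L (cat_letter_seq x a y))).

Definition block {A : Type} (f : nat -> A) (i n : nat) : list A :=
  map f (seq i n).

Definition XF_inf {A : Type} (Fw : list A -> Prop) (f : nat -> A) : Prop :=
  forall i n, ~ Fw (block f i n).

Definition XF {A : Type} (Fw : list A -> Prop) (x : Seq A) : Prop :=
  match x with
  | Inf f => XF_inf Fw f
  | Fin w => infinite_pred (fun a => exists g : nat -> A,
                                   XF_inf Fw (prepend (w ++ [a]) g))
  end.

Definition is_N_step_shift {A : Type} (N : nat) (L : Seq A -> Prop) : Prop :=
  is_shift_space L /\
  exists Fw : list A -> Prop,
    (forall w, Fw w -> length w = S N) /\
    (forall x, L x <-> XF Fw x).

(* continuity of phi restricted to L (subspace topologies) *)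
Definition continuous_on {A B : Type} (L : Seq A -> Prop) (phi : Seq A -> Seq B) : Prop :=
  forall V : Seq B -> Prop, is_open V ->
    exists U : Seq A -> Prop, is_open U /\
      forall x, L x -> (V (phi x) <-> U x).

Definition conjugacy {A B : Type} (L : Seq A -> Prop) (Y : Seq B -> Prop)
  (phi : Seq A -> Seq B) : Prop :=
  (forall x, L x -> Y (phi x)) /\
  (forall x x', L x -> L x' -> phi x = phi x' -> x = x') /\
  (forall y, Y y -> exists x, L x /\ phi x = y) /\
  continuous_on L phi /\
  (forall x, L x -> phi (shift x) = shift (phi x)) /\
  (forall x, L x -> seq_len (phi x) = seq_len x).

Definition conjugate {A B : Type} (L : Seq A -> Prop) (Y : Seq B -> Prop) : Prop :=
  exists phi, conjugacy L Y phi.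

(* Main.v *)
Require Import Defs.
From Stdlib Require Import List Arith Lia Classical FunctionalExtensionality.
Import ListNotations.

Lemma ip_mono {A} (P Q : A -> Prop) : infinite_pred P -> (forall a, P a -> Q a) -> infinite_pred Q.
Proof. intros HP H [l Hl]. apply HP. exists l. intros a Ha. apply Hl, H, Ha. Qed.

Lemma ip_ex {A} (P : A -> Prop) : infinite_pred P -> exists a, P a.
Proof. intros HP. apply NNPP. intros Hn. apply HP. exists []. intros a Ha. apply Hn. eauto. Qed.

Lemma block_len {A} (f : nat -> A) i n : length (block f i n) = n.
Proof. unfold block. now rewrite length_map, length_seq. Qed.

Lemma block_S {A} (f : nat -> A) i n : block (fun k => f (S k)) i n = block f (S i) n.
Proof. unfold block. rewrite <- seq_shift, map_map. reflexivity. Qed.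

Lemma block_eq_gen {A} (w : list A) : forall k f,
  (forall i b, nth_error w i = Some b -> f (k + i) = b) -> map f (seq k (length w)) = w.
Proof.
  induction w as [|b w IH]; intros k f H; simpl; [reflexivity|].
  f_equal.
  - specialize (H 0 b eq_refl). now rewrite Nat.add_0_r in H.
  - apply IH. intros i c Hi. specialize (H (S i) c Hi). now rewrite Nat.add_succ_r in H.
Qed.

Lemma block_eq {A} (w : list A) f :
  (forall i b, nth_error w i = Some b -> f i = b) -> block f 0 (length w) = w.
Proof. intros H. apply block_eq_gen. exact H. Qed.

Lemma block_prepend {A} (u : list A) g : block (prepend u g) 0 (length u) = u.
Proof.
  apply block_eq. intros i b Hi. unfold prepend.
  assert (i < length u) by (apply nth_error_Some; congruence).
  replace (i <? length u) with true by (symmetry; now apply Nat.ltb_lt).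
  now apply nth_error_nth.
Qed.

Definition consf {A} (a : A) (f : nat -> A) : nat -> A :=
  fun n => match n with 0 => a | S k => f k end.

Lemma prepend_cons {A} (a : A) u g : prepend (a :: u) g = consf a (prepend u g).
Proof. apply functional_extensionality. intros [|n]; reflexivity. Qed.

Lemma XF_inf_shift {A} (Fw : list A -> Prop) f : XF_inf Fw f -> XF_inf Fw (fun k => f (S k)).
Proof. intros H i n. rewrite block_S. apply H. Qed.

Lemma XF_inv {A} (Fw : list A -> Prop) z : XF Fw z ->
  exists h, XF_inf Fw h /\ forall k a, letter z k = Some a -> h k = a.
Proof.
  destruct z as [l|f]; simpl.
  - intros H. destruct (ip_ex _ H) as [c [g Hg]].
    exists (prepend (l ++ [c]) g). split; [exact Hg|].
    intros k a Hk. unfold prepend.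
    assert (k < length l) by (apply nth_error_Some; congruence).
    rewrite length_app. replace (k <? length l + length [c]) with true
      by (symmetry; apply Nat.ltb_lt; simpl; lia).
    rewrite app_nth1 by lia. now apply nth_error_nth.
  - intros H. exists f. split; [exact H|]. intros k a Hk. congruence.
Qed.

Lemma XF_closed {A} (Fw : list A -> Prop) : is_closed (XF Fw).
Proof.
  unfold is_closed, is_open. intros y Hy.
  destruct y as [w|f].
  - simpl in Hy. apply NNPP in Hy. destruct Hy as [l0 Hl0].
    exists w, l0. split.
    + split; [intros i a Hi; exact Hi|]. simpl.
      replace (nth_error w (length w)) with (@None A) by (symmetry; apply nth_error_None; lia).
      exact I.
    + intros z [Hz1 Hz2] HXz. destruct (XF_inv _ _ HXz) as [h [Hh Hagree]].
      destruct (letter z (length w)) as [b|] eqn:Eb.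
      * apply Hz2. apply Hl0. exists (fun n => h (n + S (length w))).
        replace (prepend (w ++ [b]) (fun n => h (n + S (length w)))) with h; [exact Hh|].
        apply functional_extensionality. intros n. unfold prepend.
        rewrite length_app. simpl.
        destruct (n <? length w + 1) eqn:En.
        -- apply Nat.ltb_lt in En.
           destruct (Nat.lt_ge_cases n (length w)).
           ++ rewrite app_nth1 by lia.
              destruct (nth_error w n) as [c|] eqn:Ec.
              ** rewrite (nth_error_nth _ _ _ Ec). apply Hagree. apply Hz1. exact Ec.
              ** apply nth_error_None in Ec. lia.
           ++ rewrite app_nth2 by lia. replace (n - length w) with 0 by lia. simpl.
              replace n with (length w) by lia. apply Hagree, Eb.
        -- apply Nat.ltb_ge in En. f_equal. lia.
      * destruct z as [l|g]; simpl in Eb; [|discriminate].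
        assert (l = w).
        { apply nth_error_ext. intros n.
          destruct (nth_error w n) as [c|] eqn:Ec.
          - apply Hz1 in Ec. exact Ec.
          - apply nth_error_None in Ec. apply nth_error_None in Eb.
            apply nth_error_None. lia. }
        subst l. simpl in HXz. apply HXz. exists l0. exact Hl0.
  - simpl in Hy. unfold XF_inf in Hy.
    apply not_all_ex_not in Hy. destruct Hy as [i Hy].
    apply not_all_ex_not in Hy. destruct Hy as [n Hy]. apply NNPP in Hy.
    exists (block f 0 (i + n)), []. split.
    + split; [|simpl; auto].
      intros k a Hk. unfold block in Hk. rewrite nth_error_map in Hk.
      destruct (nth_error (seq 0 (i+n)) k) as [m|] eqn:Em; simpl in Hk; [|discriminate].
      assert (Hlt : k < length (seq 0 (i + n))) by (apply nth_error_Some; congruence).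
      rewrite length_seq in Hlt.
      apply (nth_error_nth _ _ 0) in Em. rewrite seq_nth in Em by lia. simpl in Em.
      subst. simpl. congruence.
    + intros z [Hz1 _] HXz. destruct (XF_inv _ _ HXz) as [h [Hh Hagree]].
      apply (Hh i n). replace (block h i n) with (block f i n); [exact Hy|].
      unfold block. apply map_ext_in. intros k Hk. apply in_seq in Hk.
      symmetry. apply Hagree. apply Hz1.
      unfold block. rewrite nth_error_map.
      assert (E : nth_error (seq 0 (i+n)) k = Some k).
      { rewrite nth_error_nth' with (d := 0) by (rewrite length_seq; lia).
        rewrite seq_nth by lia. reflexivity. }
      rewrite E. reflexivity.
Qed.

Lemma XF_shift_space {A} (Fw : list A -> Prop) : is_shift_space (XF Fw).
Proof.
  split; [|split; [apply XF_closed|split]].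
  - intros [l|f] H; simpl; [|exact I]. simpl in H. eapply ip_mono; [exact H|]. auto.
  - intros [[|b l]|f] H; simpl in *.
    + exact H.
    + eapply ip_mono; [exact H|]. intros c [g Hg]. exists g.
      rewrite prepend_cons in Hg. apply XF_inf_shift in Hg. exact Hg.
    + apply XF_inf_shift, H.
  - intros x H. simpl in H. eapply ip_mono; [exact H|]. intros a [g Hg].
    exists (Inf g). split; [exact I|]. exact Hg.
Qed.

Definition hasPre {A} (X : Seq A -> Prop) (z : Seq A) : Prop :=
  exists p, X p /\ shift p = z /\ seq_len p <> Some 0.

Definition scons {A} (a : A) (z : Seq A) : Seq A :=
  match z with Fin l => Fin (a :: l) | Inf f => Inf (consf a f) end.

Lemma hasPre_iff {A} (X : Seq A -> Prop) z : hasPre X z <-> exists a, X (scons a z).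
Proof.
  split.
  - intros [p [Hp [Hs Hl]]]. destruct p as [[|b l]|f]; simpl in *.
    + congruence.
    + subst z. exists b. exact Hp.
    + subst z. exists (f 0). simpl.
      replace (consf (f 0) (fun n => f (S n))) with f; [exact Hp|].
      apply functional_extensionality. intros [|n]; reflexivity.
  - intros [a Ha]. exists (scons a z). split; [exact Ha|].
    destruct z; simpl; split; try reflexivity; discriminate.
Qed.

Lemma block_consf0 {A} (a : A) f n : block (consf a f) 0 (S n) = a :: block f 0 n.
Proof.
  unfold block. simpl. f_equal. rewrite <- seq_shift, map_map. reflexivity.
Qed.

Lemma block_consfS {A} (a : A) f k n : block (consf a f) (S k) n = block f k n.
Proof.
  unfold block. rewrite <- seq_shift, map_map. reflexivity.
Qed.

Lemma consf_XF {A} (Fw : list A -> Prop) M w f a :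
  (forall u, Fw u -> length u = S M) -> length w = M -> block f 0 M = w ->
  XF_inf Fw f -> (XF_inf Fw (consf a f) <-> ~ Fw (a :: w)).
Proof.
  intros HL Hw Hb Hf. split.
  - intros H HF. apply (H 0 (S M)). rewrite block_consf0, Hb. exact HF.
  - intros Hn i n HF. destruct i as [|k].
    + destruct n as [|n].
      * apply HL in HF. discriminate.
      * rewrite block_consf0 in HF. pose proof (HL _ HF) as E. simpl in E.
        rewrite block_len in E. injection E as E. subst n. rewrite Hb in HF. auto.
    + rewrite block_consfS in HF. exact (Hf _ _ HF).
Qed.

Lemma Mstep_key {A} (Fw : list A -> Prop) M w z a :
  (forall u, Fw u -> length u = S M) -> length w = M ->
  XF Fw z -> cyl w [] z -> (XF Fw (scons a z) <-> ~ Fw (a :: w)).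
Proof.
  intros HL Hw Hz [Hc _]. destruct z as [l|f]; simpl in *.
  - assert (Hpre : forall c g, block (prepend (l ++ [c]) g) 0 M = w).
    { intros c g. subst M. apply block_eq. intros i b Hi.
      apply Hc in Hi. unfold prepend.
      assert (i < length l) by (apply nth_error_Some; congruence).
      rewrite length_app. replace (i <? length l + length [c]) with true
        by (symmetry; apply Nat.ltb_lt; simpl; lia).
      rewrite app_nth1 by lia. now apply nth_error_nth. }
    split.
    + intros H. destruct (ip_ex _ H) as [c [g Hg]].
      destruct (ip_ex _ Hz) as [c' [g' Hg']].
      change ((a :: l) ++ [c]) with (a :: (l ++ [c])) in Hg.
      rewrite prepend_cons in Hg.
      pose proof (XF_inf_shift _ _ Hg) as Hs. simpl in Hs.
      apply (consf_XF Fw M w (prepend (l ++ [c]) g) a HL Hw (Hpre c g) Hs). exact Hg.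
    + intros Hn. eapply ip_mono; [exact Hz|]. intros c [g Hg]. exists g.
      change ((a :: l) ++ [c]) with (a :: (l ++ [c])).
      rewrite prepend_cons.
      apply (consf_XF Fw M w (prepend (l ++ [c]) g) a HL Hw (Hpre c g) Hg). exact Hn.
  - apply (consf_XF Fw M w); auto. subst M. apply block_eq. intros i b Hi.
    apply Hc in Hi. congruence.
Qed.

Lemma cyl_open {A} (w F : list A) : is_open (cyl w F).
Proof. intros y Hy. exists w, F. split; auto. Qed.

Lemma cyl_self {A} (w : list A) : cyl w [] (Fin w).
Proof.
  split; [intros i a H; exact H|]. simpl.
  destruct (nth_error w (length w)); simpl; auto.
Qed.

Definition FwL (M : nat) (u : list nat) : Prop :=
  exists a c, u = a :: repeat 0 M ++ [c] /\ a <> c.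

Definition PL (M : nat) (f : nat -> nat) : Prop :=
  forall i, (forall j, 0 < j <= M -> f (i + j) = 0) -> f i = f (i + S M).

Lemma block_nth {A} (f : nat -> A) i n k : k < n -> nth_error (block f i n) k = Some (f (i + k)).
Proof.
  intros Hk. unfold block. rewrite nth_error_map.
  rewrite nth_error_nth' with (d := 0) by (rewrite length_seq; lia).
  rewrite seq_nth by lia. reflexivity.
Qed.

Lemma PL_XF M f : PL M f -> XF_inf (FwL M) f.
Proof.
  intros HP i n [a [c [E Hac]]].
  assert (Hn : n = S (S M)).
  { pose proof (f_equal (@length nat) E) as E'. rewrite block_len in E'.
    simpl in E'. rewrite length_app, repeat_length in E'. simpl in E'. lia. }
  subst n. apply Hac.
  assert (H0 := block_nth f i (S (S M)) 0 ltac:(lia)).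
  rewrite E in H0. simpl in H0. rewrite Nat.add_0_r in H0. injection H0 as H0.
  assert (H1 := block_nth f i (S (S M)) (S M) ltac:(lia)).
  rewrite E in H1. simpl in H1. rewrite nth_error_app2 in H1 by (rewrite repeat_length; lia).
  rewrite repeat_length, Nat.sub_diag in H1. simpl in H1. injection H1 as H1.
  rewrite H0, H1. apply HP. intros j Hj.
  assert (H2 := block_nth f i (S (S M)) j ltac:(lia)).
  rewrite E in H2. destruct j as [|j]; [lia|]. simpl in H2.
  rewrite nth_error_app1 in H2 by (rewrite repeat_length; lia).
  rewrite nth_error_repeat in H2 by lia. congruence.
Qed.

Definition fc (M c : nat) : nat -> nat := fun n => if n <? M then 0 else c.

Lemma fc_lt M c n : n < M -> fc M c n = 0.
Proof. intros H. unfold fc. replace (n <? M) with true; auto. symmetry; now apply Nat.ltb_lt. Qed.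
Lemma fc_ge M c n : M <= n -> fc M c n = c.
Proof. intros H. unfold fc. replace (n <? M) with false; auto. symmetry; now apply Nat.ltb_ge. Qed.

Lemma PL_fc M c : PL M (fc M c).
Proof.
  intros i H. rewrite (fc_ge M c (i + S M)) by lia.
  destruct (Nat.lt_ge_cases i M).
  - rewrite fc_lt by lia. specialize (H M ltac:(lia)).
    rewrite fc_ge in H by lia. auto.
  - apply fc_ge; lia.
Qed.

Lemma PL_gc M c : c <> 0 -> PL M (consf c (fc M c)).
Proof.
  intros Hc i H. destruct M as [|M].
  - destruct i; simpl; rewrite ?fc_ge by lia; reflexivity.
  - pose proof (H 1 ltac:(lia)) as H1. pose proof (H (S M) ltac:(lia)) as H2.
    destruct i as [|i].
    + simpl. rewrite fc_ge by lia. reflexivity.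
    + exfalso. replace (S i + S M) with (S (i + S M)) in H2 by lia. simpl in H2.
      rewrite fc_ge in H2 by lia. auto.
Qed.

Lemma nat_infinite : infinite_type nat.
Proof.
  intros [l Hl]. assert (forall a, In a l -> a <= list_sum l).
  { clear Hl. induction l as [|b l IH]; simpl; intros a Ha; [contradiction|]; destruct Ha as [Ha|Ha]; subst; try lia.
    specialize (IH _ Ha). lia. }
  specialize (Hl (S (list_sum l)) I). apply H in Hl. lia.
Qed.

Lemma fresh_not_in (F : list nat) : ~ In (S (list_sum F)) F.
Proof.
  assert (forall a, In a F -> a <= list_sum F).
  { induction F as [|b l IH]; simpl; intros a Ha; [contradiction|]; destruct Ha as [Ha|Ha]; subst; try lia.
    specialize (IH _ Ha). lia. }
  intros Hin. apply H in Hin. lia.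
Qed.

Lemma x0_in M : XF (FwL M) (Fin (repeat 0 M)).
Proof.
  simpl. eapply ip_mono; [exact nat_infinite|]. intros c _.
  exists (fun _ => c). apply PL_XF.
  replace (prepend (repeat 0 M ++ [c]) (fun _ => c)) with (fc M c) by
   (apply functional_extensionality; intros n; unfold prepend;
    rewrite length_app, repeat_length; simpl;
    destruct (Nat.lt_ge_cases n M);
    [ rewrite fc_lt by lia; replace (n <? M + 1) with true by (symmetry; apply Nat.ltb_lt; lia);
      rewrite app_nth1 by (rewrite repeat_length; lia);
      assert (E : nth_error (repeat 0 M) n = Some 0) by (apply nth_error_repeat; exact H);
      symmetry; apply nth_error_nth; exact E
    | rewrite fc_ge by lia; destruct (n <? M + 1) eqn:En; auto;
      apply Nat.ltb_lt in En; rewrite app_nth2 by (rewrite repeat_length; lia);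
      rewrite repeat_length; replace (n - M) with 0 by lia; reflexivity ]).
  apply PL_fc.
Qed.

Lemma x0_nopre M : ~ hasPre (XF (FwL M)) (Fin (repeat 0 M)).
Proof.
  rewrite hasPre_iff. intros [a Ha]. simpl in Ha. apply Ha. exists [a].
  intros c [g Hg]. left.
  destruct (Nat.eq_dec a c) as [|Hne]; auto. exfalso.
  apply (Hg 0 (length (a :: repeat 0 M ++ [c]))).
  change ((a :: repeat 0 M) ++ [c]) with (a :: repeat 0 M ++ [c]).
  rewrite block_prepend. exists a, c. auto.
Qed.

Lemma near_x0 M x F : cyl x F (Fin (repeat 0 M)) ->
  exists z, XF (FwL M) z /\ cyl x F z /\ hasPre (XF (FwL M)) z.
Proof.
  intros [Hc Hlast]. simpl in Hlast, Hc.
  set (c := S (list_sum F)).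
  assert (HcF : ~ In c F) by apply fresh_not_in.
  assert (Hlen : length x <= M).
  { destruct (Nat.le_gt_cases (length x) M) as [|Hg]; auto.
    destruct (nth_error x M) as [b|] eqn:Eb.
    - apply Hc in Eb. assert (Hs : nth_error (repeat 0 M) M <> None) by congruence.
      apply nth_error_Some in Hs. rewrite repeat_length in Hs. lia.
    - apply nth_error_None in Eb. lia. }
  exists (Inf (fc M c)). split; [|split].
  - apply PL_XF, PL_fc.
  - split.
    + intros i a Hi. apply Hc in Hi. simpl.
      assert (a = 0) by (eapply repeat_spec, nth_error_In, Hi).
      assert (Hs : nth_error (repeat 0 M) i <> None) by congruence.
      apply nth_error_Some in Hs. rewrite repeat_length in Hs.
      rewrite fc_lt by lia. congruence.
    + simpl. destruct (Nat.lt_ge_cases (length x) M).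
      * rewrite fc_lt by lia. rewrite nth_error_repeat in Hlast by lia. exact Hlast.
      * rewrite fc_ge by lia. exact HcF.
  - apply hasPre_iff. exists c. simpl. apply PL_XF, PL_gc. unfold c. lia.
Qed.

Theorem mainTheorem2 : forall M : nat,
  exists (A : Type) (L : Seq A -> Prop),
    infinite_type A /\
    is_N_step_shift (S M) L /\
    forall (B : Type) (Y : Seq B -> Prop),
      is_N_step_shift M Y -> ~ conjugate L Y.
Proof.
  intros M. exists nat, (XF (FwL M)). split; [exact nat_infinite|]. split.
  - split; [apply XF_shift_space|]. exists (FwL M). split; [|tauto].
    intros u [a [c [E _]]]. subst u. simpl. rewrite length_app, repeat_length. simpl. lia.
  - intros B Y [_ [Fw [HFw HY]]] [phi [Hmap [Hinj [Hsurj [Hcont [Hcomm Hlen]]]]]].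
    set (L := XF (FwL M)) in *.
    pose proof (XF_shift_space (FwL M)) as [_ [_ [HshL _]]].
    set (x0 := Fin (repeat 0 M)).
    assert (Hx0 : L x0) by apply x0_in.
    destruct (phi x0) as [w|g] eqn:Ey0.
    2:{ pose proof (Hlen x0 Hx0) as E. rewrite Ey0 in E. discriminate. }
    assert (Hw : length w = M).
    { pose proof (Hlen x0 Hx0) as E. rewrite Ey0 in E. simpl in E.
      rewrite repeat_length in E. congruence. }
    assert (HYw : Y (Fin w)) by (rewrite <- Ey0; apply Hmap, Hx0).
    assert (Hinv : forall z, Y z -> cyl w [] z -> hasPre Y z -> hasPre Y (Fin w)).
    { intros z Hz Hcz Hpz. rewrite hasPre_iff in *. destruct Hpz as [a Ha].
      exists a. apply HY. apply HY in Ha. apply HY in Hz. apply HY in HYw.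
      apply (Mstep_key Fw M w (Fin w) a HFw Hw HYw (cyl_self w)).
      apply (Mstep_key Fw M w z a HFw Hw Hz Hcz). exact Ha. }
    destruct (Hcont (cyl w []) (cyl_open w [])) as [U [HU HUiff]].
    assert (HUx0 : U x0) by (apply HUiff; [exact Hx0|]; rewrite Ey0; apply cyl_self).
    destruct (HU x0 HUx0) as [x [F [Hcx HxU]]].
    destruct (near_x0 M x F Hcx) as [z [Hz [Hcz Hpz]]].
    assert (HUz : U z) by (apply HxU, Hcz).
    apply HUiff in HUz; [|exact Hz].
    apply (x0_nopre M). fold x0. fold L in Hpz |- *.
    assert (HpY : hasPre Y (phi z)).
    { destruct Hpz as [p [Hp [Hs Hl]]]. exists (phi p). split; [apply Hmap, Hp|].
      split.
      - rewrite <- Hcomm by exact Hp. now rewrite Hs.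
      - rewrite Hlen by exact Hp. exact Hl. }
    pose proof (Hinv (phi z) (Hmap z Hz) HUz HpY) as [q [Hq [Hsq Hlq]]].
    destruct (Hsurj q Hq) as [p [Hp Epq]]. subst q.
    exists p. split; [exact Hp|]. split.
    + apply Hinj; [apply HshL, Hp|exact Hx0|].
      rewrite Hcomm by exact Hp. rewrite Hsq. symmetry. exact Ey0.
    + rewrite <- (Hlen p Hp). exact Hlq.
Qed.
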